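(* Let $\rho$ be a Drinfeld $\mathbb{F}_q[t]$-module of rank $r$ defined over a field $K\subseteq\overline{k}$, with $\omega_1,\dots,\omega_r$ an $A$-basis of $\Lambda_\rho$, $f_i=\sum_{m\ge0}\exp_\rho(\omega_i/\theta^{m+1})t^m\in K^{\mathrm{sep}}[[t]]$, and $\Upsilon\in\mathrm{Mat}_r(K^{\mathrm{sep}}[[t]])$ defined by $\Upsilon_{ij}=f_i^{(j-1)}$. Then for every $\epsilon\in\mathrm{Gal}(K^{\mathrm{sep}}/K)$, $\epsilon(\Upsilon^{(1)})=g_\epsilon\Upsilon^{(1)}$.
   Context: $\mathbb{F}_q$ is the field with $q$ elements, $\theta,t$ independent variables, $A=\mathbb{F}_q[\theta]$, $k=\mathbb{F}_q(\theta)$, $\mathbb{C}_\infty$ the completion of an algebraic closure of $\mathbb{F}_q((1/\theta))$, $\overline{k}$ the algebraic closure of $k$ in $\mathbb{C}_\infty$, $K^{\mathrm{sep}}$ the separable closure of $K$ in $\overline{k}$. For $f=\sum a_it^i$, $f^{(n)}=\sum a_i^{q^n}t^i$ (entrywise on matrices). $\tau$ is the $q$-power Frobenius; $\rho$ is the $\mathbb{F}_q$-algebra map $\mathbb{F}_q[t]\to K[\tau]$ determined by $\rho_t=\theta+\kappa_1\tau+\dots+\kappa_r\tau^r$ ($\kappa_r\ne0$), acting on $\mathbb{C}_\infty$ by $(\sum c_i\tau^i)(x)=\sum c_ix^{q^i}$. $\exp_\rho$ is the unique entire $\mathbb{F}_q$-linear series $z+\sum_{i\ge1}\alpha_iz^{q^i}$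 with $\exp_\rho(\theta z)=\rho_t(\exp_\rho(z))$; $\Lambda_\rho=\ker\exp_\rho$. $\xi_{i,m}=\exp_\rho(\omega_i/\theta^{m+1})$, $x_i=(\xi_{i,0},\xi_{i,1},\dots)$ form an $\mathbb{F}_q[[t]]$-basis of the $t$-adic Tate module $T_t(\rho)=\varprojlim\rho[t^m]$; $\mathrm{Gal}(K^{\mathrm{sep}}/K)$ acts on it via $\varphi_t$, and $g_\epsilon\in\mathrm{GL}_r(\mathbb{F}_q[[t]])$ is defined by $\varphi_t(\epsilon)\mathbf{x}=g_\epsilon\mathbf{x}$, $\mathbf{x}=[x_1,\dots,x_r]^{\mathrm{tr}}$. Galois acts on $K^{\mathrm{sep}}[[t]]$ coefficientwise and on matrices entrywise. *)

(* Defs.v *)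
From HB Require Import structures.
From mathcomp Require Import all_boot all_order all_algebra all_field.
From mathcomp Require Import reals.
Set Implicit Arguments. Unset Strict Implicit. Unset Printing Implicit Defensive.
Import Order.TTheory GRing.Theory Num.Theory.
Local Open Scope ring_scope.

Section Defs.
Variables (R : realType) (C : fieldType).

Definition is_nonarch_abs (nrm : C -> R) : Prop :=
  [/\ forall x, 0 <= nrm x,
      forall x, nrm x = 0 <-> x = 0,
      forall x y, nrm (x * y) = nrm x * nrm y
    & forall x y, nrm (x + y) <= Num.max (nrm x) (nrm y)].

Definition cvg_to (nrm : C -> R) (u : nat -> C) (l : C) : Prop :=
  forall eps : R, 0 < eps -> exists N, forall n, (N <= n)%N -> nrm (u n - l) < eps.

Definition cauchy_seq (nrm : C -> R) (u : nat -> C) : Prop :=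
  forall eps : R, 0 < eps -> exists N, forall m n, (N <= m)%N -> (N <= n)%N ->
    nrm (u m - u n) < eps.

Definition complete_abs (nrm : C -> R) : Prop :=
  forall u, cauchy_seq nrm u -> exists l, cvg_to nrm u l.

Definition in_Fq (q : nat) (c : C) : Prop := c ^+ q = c.

Definition poly_over_Fq (q : nat) (a : {poly C}) : Prop := forall i, in_Fq q a`_i.

Definition in_A (q : nat) (theta x : C) : Prop :=
  exists a : {poly C}, poly_over_Fq q a /\ x = a.[theta].

Definition in_k (q : nat) (theta x : C) : Prop :=
  exists a b : {poly C}, [/\ poly_over_Fq q a, poly_over_Fq q b, b.[theta] != 0
                           & x = a.[theta] / b.[theta]].

Definition algebraic_over (S : C -> Prop) (x : C) : Prop :=
  exists p : {poly C}, [/\ p != 0, forall i, S p`_i & root p x].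

Definition in_kbar (q : nat) (theta x : C) : Prop := algebraic_over (in_k q theta) x.

Definition is_subfield (S : C -> Prop) : Prop :=
  [/\ S 0, S 1, (forall x y, S x -> S y -> S (x - y)),
      (forall x y, S x -> S y -> S (x * y))
    & (forall x, S x -> x != 0 -> S x^-1)].

Definition in_sep (K : C -> Prop) (x : C) : Prop :=
  exists p : {poly C}, [/\ p != 0, forall i, K p`_i, root p x & separable_poly p].

(* eps in Gal(K^sep/K): a field automorphism of K^sep fixing K pointwise
   (represented by a function C -> C whose values off K^sep are irrelevant) *)
Definition is_gal (K : C -> Prop) (eps : C -> C) : Prop :=
  (forall x, in_sep K x -> in_sep K (eps x)) /\
  [/\ forall x y, in_sep K x -> in_sep K y -> eps (x + y) = eps x + eps y,
      forall x y, in_sep K x -> in_sep K y -> eps (x * y) = eps x * eps y,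
      forall x y, in_sep K x -> in_sep K y -> eps x = eps y -> x = y,
      forall y, in_sep K y -> exists2 x, in_sep K x & eps x = y
    & forall x, K x -> eps x = x].

Definition rho_t (q : nat) (theta : C) (kappa : nat -> C) (r : nat) (z : C) : C :=
  theta * z + \sum_(1 <= j < r.+1) kappa j * z ^+ (q ^ j).

Definition rho_tn q theta kappa r (n : nat) (z : C) : C := iter n (rho_t q theta kappa r) z.

Definition ps_mul (a b : nat -> C) : nat -> C :=
  fun m => \sum_(n < m.+1) a n * b (m - n)%N.

Definition ps_twist (q k : nat) (f : nat -> C) : nat -> C := fun m => f m ^+ (q ^ k).

Definition ps_gal (eps : C -> C) (f : nat -> C) : nat -> C := fun m => eps (f m).

Definition psmx_mul (r : nat) (g M : 'I_r -> 'I_r -> nat -> C) : 'I_r -> 'I_r -> nat -> C :=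
  fun i j m => \sum_(k < r) ps_mul (g i k) (M k j) m.

(* f_i = sum_m exp_rho(omega_i / theta^(m+1)) t^m ; also x_i = (xi_{i,0}, xi_{i,1}, ...) *)
Definition f_ser (E : C -> C) (theta : C) (r : nat) (omega : 'I_r -> C) (i : 'I_r) : nat -> C :=
  fun m => E (omega i / theta ^+ m.+1).

(* Upsilon_{ij} = f_i^(j-1), with 0-based column index j : 'I_r *)
Definition Upsilon q E theta r omega : 'I_r -> 'I_r -> nat -> C :=
  fun i j => ps_twist q j (f_ser E theta omega i).

Definition Upsilon1 q E theta r omega : 'I_r -> 'I_r -> nat -> C :=
  fun i j => ps_twist q 1 (Upsilon q E theta omega i j).

(* F_q[[t]]-action on the Tate module T_t(rho) = lim rho[t^(m+1)] (component m):
   (a . x)_m = sum_{n <= m} a_n rho_{t^n}(x_m) *)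
Definition tate_scale q theta kappa r (a x : nat -> C) : nat -> C :=
  fun m => \sum_(n < m.+1) a n * rho_tn q theta kappa r n (x m).

End Defs.

(* Main.v *)
Require Import Defs.
From HB Require Import structures.
From mathcomp Require Import all_boot all_order all_algebra all_field.
From mathcomp Require Import reals.
From mathcomp Require Import boolp.
From mathcomp Require Import ring.
From Stdlib Require Import Classical.
Import Order.TTheory GRing.Theory Num.Theory.
Local Open Scope ring_scope.

Section Helpers.
Set Implicit Arguments. Unset Strict Implicit. Unset Printing Implicit Defensive.
Local Notation "p ^ f" := (map_poly f p) : ring_scope.

Lemma min_root_poly (F L : fieldType) (iota : {rmorphism F -> L}) (x : L) (P : {poly F}) :
  P != 0 -> root (P ^ iota) x ->
  exists p : {poly F}, [/\ p %| P, root (p ^ iota) x, p != 0 &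
     forall q, root (q ^ iota) x -> q != 0 -> (size p <= size q)%N].
Proof.
move: {2}(size P) (leqnn (size P)) => n; elim: n P => [|n IH] P.
  by rewrite leqn0 size_poly_eq0 => /eqP->; rewrite eqxx.
move=> hs nzP rP.
case: (classic (exists q : {poly F}, [/\ root (q ^ iota) x, q != 0 & (size q < size P)%N])).
  case=> q [rq nzq lt]; set r := gcdp P q.
  have nzr : r != 0 by rewrite gcdp_eq0 negb_and nzP.
  have rr : root (r ^ iota) x by rewrite /r gcdp_map root_gcd rP rq.
  have hr : (size r <= n)%N.
    have := dvdp_leq nzq (dvdp_gcdr P q); rewrite -/r => h.
    by rewrite -ltnS (leq_ltn_trans h) // (leq_trans lt).
  have [p [pr rp nzp mp]] := IH r hr nzr rr.
  exists p; split=> //; exact: dvdp_trans pr (dvdp_gcdl P q).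
move=> hn; exists P; split=> // q rq nzq; rewrite leqNgt; apply/negP => lt.
by apply: hn; exists q.
Qed.

Lemma sep_pow_gen (F L : fieldType) (iota : {rmorphism F -> L}) (x : L) (P : {poly F}) k :
  separable_poly P -> root (P ^ iota) x ->
  exists Q : {poly F}, [/\ Q != 0, separable_poly Q & root (Q ^ iota) (x ^+ k)].
Proof.
move=> sP rP; have nzP := separable_poly_neq0 sP.
have [p [pP rp nzp mp]] := min_root_poly nzP rP.
have irr : irreducible_poly p by apply/(subfx_irreducibleP rp nzp).
pose M := SubFieldExtType rp irr.
pose z : M := subfx_root iota x p.
have sp : separable_poly p := dvdp_separable pP sP.
have sz : separable_element 1%VS z.
  apply/separable_elementP; exists (p ^ in_alg M); split.
  - by apply/polyOver1P; exists p.
  - apply/eqP/(fmorph_inj (subfx_inj : {rmorphism M -> L})).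
    rewrite rmorph0 -horner_map /= subfx_inj_root //.
    have -> : (p ^ in_alg M) ^ subfx_inj = p ^ iota.
      by apply/polyP => i; rewrite !coef_map /= subfx_inj_base.
    exact/eqP.
  - by rewrite (separable_map (GRing.in_alg M)).
have sy : separable_element 1%VS (z ^+ k).
  by move: sz; rewrite adjoin_separable_eq => /separableP; apply; rewrite rpredX // memv_adjoin.
have /polyOver1P[q Dq] := minPolyOver 1%VS (z ^+ k).
exists q; split.
- apply: contraTneq (monic_neq0 (monic_minPoly 1%VS (z ^+ k))) => q0.
  by rewrite Dq q0 map_poly0 eqxx.
- by move: sy; rewrite /separable_element Dq (separable_map (GRing.in_alg M)).
- have := root_minPoly 1%VS (z ^+ k); rewrite Dq => /eqP/(congr1 (subfx_inj : {rmorphism M -> L})).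
  rewrite rmorph0 -horner_map /= rmorphXn /= subfx_inj_root //.
  have -> : (q ^ in_alg M) ^ subfx_inj = q ^ iota.
    by apply/polyP => i; rewrite !coef_map /= subfx_inj_base.
  by move=> h; apply/eqP.
Qed.

End Helpers.

Section Helpers2.
Set Implicit Arguments. Unset Strict Implicit. Unset Printing Implicit Defensive.
Local Notation "p ^ f" := (map_poly f p) : ring_scope.
Section SubK.
Variables (C : fieldType) (K : C -> Prop) (hK : is_subfield K).

Definition Kb : {pred C} := fun c => `[< K c >].

Lemma Kb_divring : divring_closed Kb.
Proof.
case: hK => K0 K1 KB KM KV; split.
- by apply/asboolP.
- by move=> u v /asboolP ? /asboolP ?; apply/asboolP; apply: KB.
- move=> u v /asboolP ? /asboolP Kv; apply/asboolP; apply: KM => //.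
  have [->|nz] := eqVneq v 0; first by rewrite invr0.
  exact: KV.
Qed.

HB.instance Definition _ := GRing.isDivringClosed.Build C Kb Kb_divring.

Record KF := KFPack { kval : C; kvalP : kval \in Kb }.
HB.instance Definition _ := [isSub for kval].
HB.instance Definition _ := [Choice of KF by <:].
HB.instance Definition _ := [SubChoice_isSubIntegralDomain of KF by <:].
HB.instance Definition _ := [SubIntegralDomain_isSubField of KF by <:].

Lemma sep_pow x k : in_sep K x -> in_sep K (x ^+ k).
Proof.
case=> p [nzp Kp rp sp].
have kP i : p`_i \in Kb by apply/asboolP.
pose pF : {poly KF} := \poly_(i < size p) KFPack (kP i).
have DpF : pF ^ (val : {rmorphism KF -> C}) = p.
  apply/polyP => i; rewrite coef_map coef_poly /=.
  by case: ltnP => // h; rewrite nth_default.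
have spF : separable_poly pF by rewrite -(separable_map (val : {rmorphism KF -> C})) DpF.
have rpF : root (pF ^ (val : {rmorphism KF -> C})) x by rewrite DpF.
have [Q [nzQ sQ rQ]] := sep_pow_gen k spF rpF.
exists (Q ^ (val : {rmorphism KF -> C})); split => //.
- by rewrite map_poly_eq0.
- by move=> i; rewrite coef_map /=; apply/asboolP/(valP (Q`_i)).
- by rewrite (separable_map (val : {rmorphism KF -> C})).
Qed.

End SubK.

Section Tors.
Variables (C : fieldType) (K : C -> Prop) (hK : is_subfield K).

Definition KP (P : {poly C}) := forall i, K P`_i.

Lemma K0 : K 0. Proof. by case: hK. Qed.
Lemma K1 : K 1. Proof. by case: hK. Qed.
Lemma KB x y : K x -> K y -> K (x - y). Proof. by case: hK => _ _ h _ _; apply: h. Qed.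
Lemma KM x y : K x -> K y -> K (x * y). Proof. by case: hK => _ _ _ h _; apply: h. Qed.
Lemma KD x y : K x -> K y -> K (x + y).
Proof. move=> hx hy; have -> : x + y = x - (0 - y) by rewrite sub0r opprK.
apply: KB => //; apply: KB => //; exact: K0. Qed.
Lemma Ksum (I : Type) (s : seq I) (F : I -> C) : (forall i, K (F i)) -> K (\sum_(i <- s) F i).
Proof. by move=> h; apply: big_ind => //; [exact: K0 | exact: KD]. Qed.

Lemma KP_add P Q : KP P -> KP Q -> KP (P + Q).
Proof. by move=> hP hQ i; rewrite coefD; apply: KD. Qed.
Lemma KP_sum (I : Type) (s : seq I) (Pr : pred I) (F : I -> {poly C}) :
  (forall i, Pr i -> KP (F i)) -> KP (\sum_(i <- s | Pr i) F i).
Proof.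
move=> h; apply: big_ind => //; last exact: KP_add.
by move=> i; rewrite coef0; exact: K0.
Qed.
Lemma KP_mul P Q : KP P -> KP Q -> KP (P * Q).
Proof. by move=> hP hQ i; rewrite coefM; apply: Ksum => j; apply: KM. Qed.
Lemma KP_scale c P : K c -> KP P -> KP (c *: P).
Proof. by move=> hc hP i; rewrite coefZ; apply: KM. Qed.
Lemma KP_1 : KP 1.
Proof. by move=> i; rewrite coef1; case: (i == 0)%N; [exact: K1 | exact: K0]. Qed.
Lemma KP_X : KP 'X.
Proof. by move=> i; rewrite coefX; case: (i == 1)%N; [exact: K1 | exact: K0]. Qed.
Lemma KP_exp P n : KP P -> KP (P ^+ n).
Proof. by move=> hP; elim: n => [|n IH]; [rewrite expr0; exact: KP_1 | rewrite exprS; apply: KP_mul]. Qed.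
Lemma KP_comp P Q : KP P -> KP Q -> KP (P \Po Q).
Proof.
move=> hP hQ; rewrite comp_polyE; apply: KP_sum => i _.
by apply: KP_scale => //; apply: KP_exp.
Qed.

Variables (p q : nat) (hchar : p \in [pchar C]) (hpq : (p %| q)%N).
Variables (theta : C) (kappa : nat -> C) (r : nat).
Hypotheses (hth : K theta) (hka : forall j, (1 <= j <= r)%N -> K (kappa j)).

Definition Pt : {poly C} := theta *: 'X + \sum_(1 <= j < r.+1) kappa j *: 'X^(q ^ j).
Definition Pn n : {poly C} := iter n (fun P => Pt \Po P) 'X.

Lemma Pt_K : KP Pt.
Proof.
apply: KP_add; first by apply: KP_scale => //; exact: KP_X.
rewrite big_seq_cond; apply: KP_sum => j /andP[]; rewrite mem_index_iota => /andP[h1 h2] _.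
by apply: KP_scale; [apply: hka; rewrite h1 -ltnS h2 | apply: KP_exp; exact: KP_X].
Qed.

Lemma Pn_K n : KP (Pn n).
Proof. elim: n => [|n IH]; [exact: KP_X | rewrite /Pn iterS; apply: KP_comp => //; exact: Pt_K]. Qed.

Lemma Pt_eval z : Pt.[z] = rho_t q theta kappa r z.
Proof.
rewrite /Pt /rho_t hornerD hornerZ hornerX horner_sum; congr (_ + _).
by apply: eq_bigr => j _; rewrite hornerZ hornerXn.
Qed.

Lemma Pn_eval n z : (Pn n).[z] = rho_tn q theta kappa r n z.
Proof.
elim: n => [|n IH]; first by rewrite /Pn /= hornerX.
by rewrite /Pn iterS horner_comp -/(Pn n) IH Pt_eval /rho_tn iterS.
Qed.

Lemma Pt_deriv : Pt^`() = theta%:P.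
Proof.
rewrite /Pt derivD derivZ derivX alg_polyC raddf_sum big1_seq ?addr0 //.
move=> j /andP[_]; rewrite mem_index_iota => /andP[h1 _].
rewrite /= derivZ derivXn.
have -> : 'X^((q ^ j).-1) *+ q ^ j = 0 :> {poly C}.
  rewrite -mulr_natr -polyC_natr.
  have /eqP -> : (q ^ j)%:R == 0 :> C.
    rewrite -(dvdn_pcharf hchar); apply: dvdn_trans hpq _.
    by rewrite -(expn1 q) dvdn_exp2l.
  by rewrite mulr0.
by rewrite scaler0.
Qed.

Lemma Pn_deriv n : (Pn n)^`() = (theta ^+ n)%:P.
Proof.
elim: n => [|n IH]; first by rewrite /Pn /= derivX expr0.
by rewrite /Pn iterS deriv_comp -/(Pn n) IH Pt_deriv comp_polyC -polyCM exprS.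
Qed.

Lemma Pn_sep n : theta != 0 -> separable_poly (Pn n).
Proof.
move=> nz; rewrite unlock Pn_deriv.
have -> : (theta ^+ n)%:P = theta ^+ n *: (1 : {poly C}) by rewrite -mul_polyC mulr1.
by rewrite coprimepZr ?expf_neq0 // coprimep1.
Qed.

Lemma tors_sep n x : theta != 0 -> rho_tn q theta kappa r n x = 0 -> in_sep K x.
Proof.
move=> nz h; exists (Pn n); split.
- exact: separable_poly_neq0 (Pn_sep n nz).
- exact: Pn_K.
- by rewrite /root Pn_eval h.
- exact: Pn_sep.
Qed.

End Tors.

End Helpers2.
Unset Implicit Arguments. Set Strict Implicit. Set Printing Implicit Defensive.

Lemma frob_sum {C : fieldType} {p N : nat} (hchar : p \in [pchar C]) (hN : [pchar C].-nat N)
  (I : Type) (s : seq I) (F : I -> C) :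
  (\sum_(i <- s) F i) ^+ N = \sum_(i <- s) F i ^+ N.
Proof.
have N0 : (0 < N)%N by move: hN; rewrite /pnat => /andP[].
apply: (big_morph (fun z : C => z ^+ N)) => [x y|]; first exact: exprDn_pchar.
by rewrite expr0n gtn_eqF.
Qed.

Lemma Fq_pow (C : fieldType) q (c : C) s : in_Fq q c -> c ^+ (q ^ s) = c.
Proof.
move=> h; elim: s => [|s IH]; first by rewrite expn0 expr1.
by rewrite expnSr exprM IH h.
Qed.

Theorem corollary3p2
  (* the field C = C_infinity: complete, algebraically closed, non-archimedean,
     characteristic p, containing theta with |theta| > 1, kbar dense in C *)
  (R : realType) (C : closedFieldType) (nrm : C -> R)
  (p e q : nat) (hp : prime p) (hchar : p \in [pchar C]) (he : (0 < e)%N)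
  (hq : q = (p ^ e)%N)
  (habs : is_nonarch_abs nrm) (hcomp : complete_abs nrm)
  (theta : C) (htheta : 1 < nrm theta)
  (hdense : forall (x : C) (eps : R), 0 < eps ->
              exists2 y, in_kbar q theta y & nrm (x - y) < eps)
  (* the field of definition K, k subset K subset kbar *)
  (K : C -> Prop) (hK : is_subfield K) (hKkbar : forall x, K x -> in_kbar q theta x)
  (* the Drinfeld module rho_t = theta + kappa_1 tau + ... + kappa_r tau^r over K *)
  (r : nat) (hr : (0 < r)%N) (kappa : nat -> C)
  (hthetaK : K theta) (hkappaK : forall j, (1 <= j <= r)%N -> K (kappa j))
  (hkappar : kappa r != 0)
  (* its exponential: entire series z + sum_{i>=1} alpha_i z^(q^i) with
     exp(theta z) = rho_t(exp z) *)
  (E : C -> C) (alpha : nat -> C) (halpha0 : alpha 0%N = 1)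
  (hE : forall z, cvg_to nrm (fun n => \sum_(i < n) alpha i * z ^+ (q ^ i)) (E z))
  (hEfun : forall z, E (theta * z) = rho_t q theta kappa r (E z))
  (* omega_1..omega_r an A-basis of Lambda_rho = ker exp_rho *)
  (omega : 'I_r -> C) (homega : forall i, E (omega i) = 0)
  (hspan : forall lam, E lam = 0 ->
     exists a : 'I_r -> C, (forall i, in_A q theta (a i)) /\ lam = \sum_(i < r) a i * omega i)
  (hfree : forall a : 'I_r -> C, (forall i, in_A q theta (a i)) ->
     \sum_(i < r) a i * omega i = 0 -> forall i, a i = 0)
  (* epsilon in Gal(K^sep/K) and its matrix g_eps in Mat_r(F_q[[t]]) on the basis x *)
  (eps : C -> C) (heps : is_gal K eps)
  (g : 'I_r -> 'I_r -> nat -> C) (hgFq : forall i j n, in_Fq q (g i j n))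
  (hg : forall i : 'I_r,
     ps_gal eps (f_ser E theta omega i)
     = (fun m => \sum_(k < r) tate_scale q theta kappa r (g i k) (f_ser E theta omega k) m)) :
  forall i j : 'I_r,
    ps_gal eps (Upsilon1 q E theta omega i j) = psmx_mul g (Upsilon1 q E theta omega) i j.
Proof.
have nzth : theta != 0.
  apply/eqP => h; move: htheta; rewrite h.
  case: habs => _ h0 _ _; by rewrite ((h0 0).2 erefl) ltr10.
have hpq : (p %| q)%N by rewrite hq dvdn_exp.
have rhoE : forall n z, rho_tn q theta kappa r n (E z) = E (theta ^+ n * z).
  elim=> [|n IH] z; first by rewrite mul1r.
  by rewrite /rho_tn iterS -/(rho_tn q theta kappa r n (E z)) IH -hEfun mulrA -exprS.
have fkm : forall k m n, (n <= m)%N ->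
    rho_tn q theta kappa r n (f_ser E theta omega k m) = f_ser E theta omega k (m - n).
  move=> k m n hnm; rewrite /f_ser rhoE; congr E.
  have -> : m.+1 = (n + (m - n).+1)%N by rewrite addnS subnKC.
  rewrite exprD; field; rewrite ?expf_neq0 //.
have sepf : forall k m, in_sep K (f_ser E theta omega k m).
  move=> k m; apply: (tors_sep hK hchar hpq hthetaK hkappaK (n := m.+1) nzth).
  by rewrite /f_ser rhoE mulrC divfK ?expf_neq0 // homega.
case: heps => hsep [hadd hmul hinj hsurj hfix].
have epsX : forall x n, in_sep K x -> eps (x ^+ n) = eps x ^+ n.
  move=> x n sx; elim: n => [|n IH]; first by rewrite !expr0 hfix //; case: hK.
  by rewrite !exprS hmul ?IH //; apply: sep_pow.
move=> i j; apply: funext => m.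
rewrite /ps_gal /Upsilon1 /Upsilon /ps_twist /psmx_mul /ps_mul.
rewrite -exprM epsX //.
have := congr1 (fun h => h m) (hg i); rewrite /ps_gal /= => ->; rewrite /tate_scale.
have Nn : [pchar C].-nat (q ^ j * q ^ 1)%N.
  rewrite -expnD hq -expnM pnatX (eq_pnat _ (pcharf_eq hchar)) pnat_id //.
rewrite (frob_sum hchar Nn); apply: eq_bigr => k _.
rewrite (frob_sum hchar Nn); apply: eq_bigr => n _.
rewrite exprMn -exprM fkm ?leq_ord //; rewrite -!expnD.
by rewrite (Fq_pow _ _ _ _ (hgFq i k n)).
Qed.
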